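(* Let $\mathcal T$ be a trie with $n$ nodes over an alphabet $\Sigma$ of size $\sigma$ and let $k\ge0$ be an integer. Then it is possible to represent $\mathcal T$ (i.e., encode it so that it can be uniquely reconstructed) in a number of bits upper-bounded by $n\mathcal H_k(\mathcal T)+2+(\sigma+1)\sigma^k\lceil\log n\rceil$.
   Context: A trie over a finite totally ordered alphabet $\Sigma$ is a rooted ordered tree with edges labeled by symbols of $\Sigma$ such that edges leaving the same node have distinct labels and siblings are ordered by their incoming labels. For a node $u$, $out(u)$ is the set of labels of edges leaving $u$; $\lambda(u)$ is the label of the edge entering $u$, with $\lambda(\text{root})=\#$, a new symbol not in $\Sigma$; $\pi(u)$ is the parent of $u$, with $\pi(\text{root})=\text{root}$. The $k$-th order context is $\lambda_0(u)=\epsilon$ and $\lambda_k(u)=\lambda_{k-1}(\pi(u))\cdot\lambda(u)$ (so it consists of the last $k$ labels on the root-to-$u$ path, left-padded with $\#$ if the depth of $u$ is less than $k$). For a length-$k$ string $w$ and $c\in\Sigma$, $n_w=|\{u:\lambda_k(u)=w\}|$ and $n_{w,c}=|\{u:\lambda_k(u)=w,\ c\in out(u)\}|$. Logarithms are base 2 and $0\log(x/0)=0$. The $k$-th order empirical entropy is $\mathcal H_k(\mathcal T)=\sum_{w}\sum_{c\in\Sigma}\left[\frac{n_{w,c}}{n}\log\frac{n_w}{n_{w,c}}+\frac{n_w-n_{w,c}}{n}\log\frac{n_w}{n_w-n_{w,c}}\right]$, the outer sum ranging over all length-$k$ contexts $w$ with $n_w>0$. *)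

(* Defs.v *)
From Stdlib Require Rdefinitions Rpower.
From HB Require Import structures.
From mathcomp Require Import all_boot all_order all_algebra.
From mathcomp Require Import finmap.
From mathcomp Require Import Rstruct.
Set Implicit Arguments. Unset Strict Implicit. Unset Printing Implicit Defensive.
Import GRing.Theory Num.Theory.
Local Open Scope ring_scope.
Local Open Scope fset_scope.

(* A trie is represented by the finite set of strings spelled by its
   root-to-node paths: a node u is identified with its path label, the root
   is [::], pi(u) = take (size u).-1 u (pi(root) = root), lambda(u) = last
   symbol of u.  Siblings are ordered by their labels,
   so the ordered labelled tree is determined by this set. *)
Definition parent (sigma : nat) (u : seq 'I_sigma) : seq 'I_sigma :=
  take (size u).-1 u.

Definition is_trie (sigma : nat) (S : {fset (seq 'I_sigma)}) : bool :=
  ([::] \in S) && [forall u : S, parent (val u) \in S].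

Definition nnodes (sigma : nat) (S : {fset (seq 'I_sigma)}) : nat := #|` S|.

Definition out (sigma : nat) (S : {fset (seq 'I_sigma)}) (u : seq 'I_sigma)
  (c : 'I_sigma) : bool := rcons u c \in S.

(* Symbols of Sigma ∪ {#}: Some c is c, None is the new symbol #.
   k-th order context: the last k labels of the root-to-u path, left padded
   with # when depth(u) < k  (this is exactly lambda_k(u) of the paper, since
   lambda(root) = # and pi(root) = root). *)
Definition ctx (sigma k : nat) (u : seq 'I_sigma) : seq (option 'I_sigma) :=
  nseq (k - size u) None ++ map Some (drop (size u - k) u).

Definition n_w (sigma k : nat) (S : {fset (seq 'I_sigma)})
  (w : seq (option 'I_sigma)) : nat :=
  #|` [fset u in S | ctx k u == w]|.

Definition n_wc (sigma k : nat) (S : {fset (seq 'I_sigma)})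
  (w : seq (option 'I_sigma)) (c : 'I_sigma) : nat :=
  #|` [fset u in S | (ctx k u == w) && out S u c]|.

Definition log2 (x : Rdefinitions.R) : Rdefinitions.R := Rpower.ln x / Rpower.ln 2.

Definition hterm (n a b : nat) : Rdefinitions.R :=
  if b == 0%N then 0%R else (b%:R / n%:R * log2 (a%:R / b%:R))%R.

Definition contexts (sigma k : nat) (S : {fset (seq 'I_sigma)})
  : seq (seq (option 'I_sigma)) :=
  undup [seq ctx k u | u <- enum_fset S].

Definition Hk (sigma k : nat) (S : {fset (seq 'I_sigma)}) : Rdefinitions.R :=
  (\sum_(w <- contexts k S) \sum_(c < sigma)
     (hterm (nnodes S) (n_w k S w) (n_wc k S w c)
      + hterm (nnodes S) (n_w k S w) (n_w k S w - n_wc k S w c)))%R.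

(* Main.v *)
Require Import Defs.
From Stdlib Require Rdefinitions Rpower.
From HB Require Import structures.
From mathcomp Require Import all_boot all_order all_algebra.
From mathcomp Require Import finmap.
From mathcomp Require Import Rstruct.
From mathcomp Require Import zify ring lra.
Import Order.TTheory GRing.Theory Num.Theory.
Set Implicit Arguments. Unset Strict Implicit. Unset Printing Implicit Defensive.

Fixpoint bits (W x : nat) : seq bool :=
  if W is W'.+1 then odd x :: bits W' x./2 else [::].

Lemma size_bits W x : size (bits W x) = W.
Proof. by elim: W x => //= W IH x; rewrite IH. Qed.

Lemma bits_inj W x y : x < 2 ^ W -> y < 2 ^ W -> bits W x = bits W y -> x = y.
Proof.
elim: W x y => [|W IH] x y /=.
  by rewrite expn0 !ltnS !leqn0 => /eqP -> /eqP ->.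
move=> hx hy [ho hb].
have hx' : x./2 < 2 ^ W by rewrite -divn2 ltn_divLR // -expnSr.
have hy' : y./2 < 2 ^ W by rewrite -divn2 ltn_divLR // -expnSr.
by rewrite -(odd_double_half x) -(odd_double_half y) ho (IH _ _ hx' hy' hb).
Qed.

Fixpoint bw (N M : nat) : seq (seq bool) :=
  if N is N'.+1 then
    (if M is M'.+1 then map (cons true) (bw N' M') else [::]) ++ map (cons false) (bw N' M)
  else (if M == 0 then [:: [::]] else [::]).

Lemma size_bw N M : size (bw N M) = 'C(N, M).
Proof.
elim: N M => [|N IH] [|M] //=; rewrite ?size_cat !size_map ?IH ?bin0 //.
by rewrite binS addnC.
Qed.

Lemma mem_bw N M s : size s = N -> count id s = M -> s \in bw N M.
Proof.
elim: N M s => [|N IH] M [|b s] //=; first by move=> _ <-.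
case=> hs; case: b => /= hc.
  by case: M hc => // M [hc]; rewrite mem_cat map_f ?IH.
by rewrite mem_cat; apply/orP; right; rewrite map_f ?IH.
Qed.

Definition Lst (ps : seq (nat * nat)) : seq (seq (seq bool)) :=
  foldr (fun p acc => [seq b :: t | b <- bw p.1 p.2, t <- acc]) [:: [::]] ps.

Lemma size_Lst ps : size (Lst ps) = \prod_(p <- ps) 'C(p.1, p.2).
Proof.
elim: ps => [|p ps IH]; first by rewrite big_nil.
by rewrite big_cons /= size_allpairs size_bw IH.
Qed.

Lemma mem_Lst (T : Type) (f : T -> seq bool) (g : T -> nat * nat) (P : seq T) :
  (forall x, List.In x P -> f x \in bw (g x).1 (g x).2) -> map f P \in Lst (map g P).
Proof.
elim: P => [|x P IH] H /=; first by rewrite inE.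
apply/allpairsP; exists (f x, map f P) => /=; split => //.
  by apply: H; left.
by apply: IH => y hy; apply: H; right.
Qed.

Lemma binom_bound N M : 'C(N, M) * (M ^ M * (N - M) ^ (N - M)) <= N ^ N.
Proof.
case: (leqP M N) => hMN; last by rewrite bin_small.
have := expnDn (N - M) M N.
rewrite subnK // => ->.
rewrite (bigD1 (Ordinal (n:=N.+1) (m:=M) (hMN : M < N.+1))) //=.
apply: leq_trans (leq_addr _ _).
by rewrite [_ ^ M * _]mulnC.

Qed.
Local Open Scope fset_scope.

Section Trie.
Variable sigma : nat.
Implicit Types (S : {fset (seq 'I_sigma)}) (u v : seq 'I_sigma).

Lemma trie_nil S : is_trie S -> [::] \in S.
Proof. by case/andP. Qed.

Lemma trie_parent S u : is_trie S -> u \in S -> parent u \in S.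
Proof. by case/andP => _ /forallP H hu; exact: (H [` hu]). Qed.

Lemma trie_take S u i : is_trie S -> u \in S -> take i u \in S.
Proof.
move=> hS hu.
suff H : forall d, take (size u - d) u \in S.
  case: (leqP (size u) i) => hi; first by rewrite take_oversize.
  by have := H (size u - i); rewrite subKn // ltnW.
elim=> [|d IH]; first by rewrite subn0 take_size.
have := trie_parent hS IH; rewrite /parent -take_min size_take_min.
by have -> : minn (minn (size u - d) (size u)).-1 (size u - d) = size u - d.+1 by lia.
Qed.

Lemma trie_depth S u : is_trie S -> u \in S -> size u < #|` S|.
Proof.
move=> hS hu.
pose s := [seq take i u | i <- iota 0 (size u).+1].
have us : uniq s.
  rewrite map_inj_in_uniq ?iota_uniq // => i j; rewrite !mem_iota !add0n !ltnS => hi hj e.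
  by rewrite -(size_takel hi) e size_takel.
have ss : {subset s <= S} by move=> x /mapP [i _ ->]; exact: trie_take.
by have := uniq_leq_size us ss; rewrite size_map size_iota.
Qed.

Definition strs d : seq (seq 'I_sigma) := [seq tval t | t : d.-tuple 'I_sigma].

Lemma mem_strs u : u \in strs (size u).
Proof.
apply/mapP; exists (@Tuple (size u) _ u (eqxx _)) => //.
by rewrite mem_enum.
Qed.

Lemma strs_size d v : v \in strs d -> size v = d.
Proof. by case/mapP => t _ ->; rewrite size_tuple. Qed.

Lemma size_strs d : size (strs d) = sigma ^ d.
Proof. by rewrite size_map -cardE card_tuple card_ord. Qed.

Definition allU n := undup (flatten [seq strs d | d <- iota 0 n]).

Lemma mem_allU n u : size u < n -> u \in allU n.
Proof.
move=> hu; rewrite mem_undup; apply/flattenP; exists (strs (size u)); last exact: mem_strs.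
by apply: map_f; rewrite mem_iota.
Qed.

Definition Eseq n := sort (fun u v : seq 'I_sigma => size u <= size v) (allU n).

Lemma uniq_E n : uniq (Eseq n).
Proof. by rewrite sort_uniq undup_uniq. Qed.

Lemma mem_E n u : size u < n -> u \in Eseq n.
Proof. by move=> h; rewrite mem_sort mem_allU. Qed.

Lemma sorted_E n : sorted (fun u v : seq 'I_sigma => size u <= size v) (Eseq n).
Proof. by apply: sort_sorted => u v; exact: leq_total. Qed.

Lemma size_ctx k u : size (ctx k u) = k.
Proof. by rewrite /ctx size_cat size_nseq size_map size_drop; lia. Qed.

Lemma ctx_rcons k (p : seq 'I_sigma) a : 0 < k -> ctx k (rcons p a) = rcons (ctx k.-1 p) (Some a).
Proof.
move=> k0; rewrite /ctx size_rcons.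
case: (leqP k (size p).+1) => h.
  have -> : k - (size p).+1 = 0 by lia.
  have -> : k.-1 - size p = 0 by lia.
  have -> : size p - k.-1 = (size p).+1 - k by lia.
  by rewrite drop_rcons ?map_rcons //; lia.
have -> : (size p).+1 - k = 0 by lia.
have -> : size p - k.-1 = 0 by lia.
have -> : k - (size p).+1 = k.-1 - size p by lia.
by rewrite !drop0 rcons_cat map_rcons.
Qed.

Lemma ctx_behead k (p : seq 'I_sigma) : 0 < k -> ctx k.-1 p = behead (ctx k p).
Proof.
move=> k0; rewrite /ctx.
case: (ltnP (size p) k) => h.
  have -> : k - size p = (k.-1 - size p).+1 by lia.
  have -> : size p - k = 0 by lia.
  by have -> : size p - k.-1 = 0 by lia.
have -> : k - size p = 0 by lia.
have -> : k.-1 - size p = 0 by lia.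
rewrite /= behead_map -drop1 drop_drop.
by have -> : (1 + (size p - k))%N = size p - k.-1 by lia.
Qed.

Definition full (w : seq (option 'I_sigma)) := all (fun o => o != None) w.

Lemma ctx_full k u : full (ctx k u) = (k <= size u).
Proof.
rewrite /full /ctx all_cat all_map.
have -> : all (preim Some (fun o : option 'I_sigma => o != None)) (drop (size u - k) u).
  by apply/allP.
case: (leqP k (size u)) => h.
  by have -> : k - size u = 0 by lia.
by have -> : k - size u = (k - size u).-1.+1 by lia.
Qed.

Lemma ctx0 u : ctx 0 u = [::].
Proof. by apply/size0nil; rewrite size_ctx. Qed.

End Trie.

Section Recon.
Variable sigma : nat.
Implicit Types (S : {fset (seq 'I_sigma)}) (u v : seq 'I_sigma).

Lemma card_count (E : seq (seq 'I_sigma)) S (P : pred (seq 'I_sigma)) :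
  uniq E -> {subset S <= E} ->
  #|` [fset u in S | P u]| = count (fun u => (u \in S) && P u) E.
Proof.
move=> uE sE; rewrite -size_filter; apply: perm_size; apply: uniq_perm.
- exact: fset_uniq.
- exact: filter_uniq.
move=> x; rewrite mem_filter !inE.
by case hx: (x \in S) => //=; rewrite sE // andbT.
Qed.

Lemma parent_rcons u (c : 'I_sigma) : parent (rcons u c) = u.
Proof. by rewrite /parent size_rcons /= -cats1 take_size_cat. Qed.

Lemma nth_map_filter (T : eqType) (E : seq T) (p : pred T) (f : T -> bool) (u : T) d :
  p u -> u \in E -> nth d (map f (filter p E)) (count p (take (index u E) E)) = f u.
Proof.
move=> pu uE.
have hi : index u E < size E by rewrite index_mem.
rewrite -{1}(cat_take_drop (index u E) E) (drop_nth u hi) nth_index //.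
rewrite filter_cat map_cat nth_cat size_map size_filter ltnn subnn /= pu /=.
by [].
Qed.

Definition blk (E : seq (seq 'I_sigma)) k S w (c : 'I_sigma) : seq bool :=
  [seq (rcons u c \in S) | u <- E & (u \in S) && (ctx k u == w)].

Lemma recon_step (E : seq (seq 'I_sigma)) k S1 S2 L x :
  is_trie S1 -> sorted (fun u v : seq 'I_sigma => size u <= size v) E ->
  {subset S1 <= E} ->
  (forall w c, blk E k S1 w c = blk E k S2 w c) ->
  (forall y, size y <= L -> (y \in S1) = (y \in S2)) ->
  size x = L.+1 -> x \in S1 -> x \in S2.
Proof.
move=> t1 so s1 hb IH.
case/lastP: x => [|u c] //; rewrite size_rcons => -[hu] hx.
have u1 : u \in S1 by rewrite -(parent_rcons u c); exact: trie_parent.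
have u2 : u \in S2 by rewrite -IH ?hu.
have uE := s1 _ u1.
set w := ctx k u.
pose p1 := fun v => (v \in S1) && (ctx k v == w).
pose p2 := fun v => (v \in S2) && (ctx k v == w).
have hc : count p1 (take (index u E) E) = count p2 (take (index u E) E).
  apply: eq_in_count => v vin.
  have hj : index v (take (index u E) E) < size (take (index u E) E) by rewrite index_mem.
  have hv : nth u E (index v (take (index u E) E)) = v.
    rewrite -(nth_take (n0 := index u E)); first by rewrite nth_index.
    by move: hj; rewrite size_take_min; lia.
  have hiE : index u E < size E by rewrite index_mem.
  have le : size v <= size u.
    have tr : transitive (fun u v : seq 'I_sigma => size u <= size v).
      by move=> a b e h1 h2; exact: leq_trans h1 h2.
    have rf : reflexive (fun u v : seq 'I_sigma => size u <= size v) by move=> a.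
    have H := sorted_leq_nth tr rf u so.
    have hj1 : index v (take (index u E) E) < size E by move: hj; rewrite size_take_min; lia.
    have hj2 : index v (take (index u E) E) <= index u E by move: hj; rewrite size_take_min; lia.
    by have := H _ _ hj1 hiE hj2; rewrite hv nth_index.
  by rewrite /p1 /p2 IH // -hu.
have := hb w c; rewrite /blk => /(congr1 (fun s => nth false s (count p1 (take (index u E) E)))).
rewrite (nth_map_filter (p := p1) (fun v => rcons v c \in S1)) /p1 ?eqxx ?u1 //.
rewrite hc (nth_map_filter (p := p2) (fun v => rcons v c \in S2)) /p2 ?eqxx ?u2 //.
by move=> <-.
Qed.

Lemma recon (E : seq (seq 'I_sigma)) k S1 S2 :
  is_trie S1 -> is_trie S2 -> sorted (fun u v : seq 'I_sigma => size u <= size v) E ->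
  {subset S1 <= E} -> {subset S2 <= E} ->
  (forall w c, blk E k S1 w c = blk E k S2 w c) -> S1 = S2.
Proof.
move=> t1 t2 so s1 s2 hb.
suff H : forall L y, size y <= L -> (y \in S1) = (y \in S2).
  by apply/fsetP => y; exact: (H (size y)).
elim=> [|L IH] y.
  by rewrite leqn0 => /nilP ->; rewrite !trie_nil.
rewrite leq_eqVlt => /orP [/eqP hy|]; last by rewrite ltnS; exact: IH.
apply/idP/idP.
  exact: (recon_step t1 so s1 hb IH hy).
apply: (recon_step t2 so s2 (fun w c => esym (hb w c))) hy => z hz.
by rewrite IH.
Qed.

End Recon.

Section Reals.
Local Open Scope ring_scope.

Definition lnn (x : nat) : Rdefinitions.R := Rpower.ln x%:R.
Definition Fx (x : nat) : Rdefinitions.R := x%:R * lnn x.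

Lemma natr_gt0S (x : nat) : (0 < x)%N -> Rdefinitions.Rlt 0 x%:R.
Proof. by move=> h; apply/RltP; rewrite ltr0n. Qed.

Lemma lnn1 : lnn 1 = 0.
Proof. exact: Rpower.ln_1. Qed.

Lemma lnn_mul x y : (0 < x)%N -> (0 < y)%N -> lnn (x * y)%N = lnn x + lnn y.
Proof. by move=> hx hy; rewrite /lnn natrM Rpower.ln_mult //; exact: natr_gt0S. Qed.

Lemma lnn_exp x e : (0 < x)%N -> lnn (x ^ e)%N = e%:R * lnn x.
Proof. by move=> hx; rewrite /lnn natrX -RpowE Rpower.ln_pow ?INRE //; exact: natr_gt0S. Qed.

Lemma lnn_self x : lnn (x ^ x)%N = Fx x.
Proof.
case: x => [|x]; first by rewrite /Fx expn0 lnn1 mulr0n mul0r.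
by rewrite lnn_exp.
Qed.

Lemma lnn_prod (T : Type) (s : seq T) (F : T -> nat) :
  (forall i, (0 < F i)%N) -> lnn (\prod_(i <- s) F i)%N = \sum_(i <- s) lnn (F i).
Proof.
move=> hF; elim: s => [|x s IH]; first by rewrite !big_nil lnn1.
rewrite !big_cons lnn_mul ?IH //.
by elim: s {IH} => [|y s IH]; rewrite ?big_nil ?big_cons // muln_gt0 hF.
Qed.

Lemma lnn_le x y : (0 < x)%N -> (x <= y)%N -> lnn x <= lnn y.
Proof.
move=> hx; rewrite leq_eqVlt => /orP [/eqP -> //|hy].
apply/ltW/RltP; apply: Rpower.ln_increasing; first exact: natr_gt0S.
by apply/RltP; rewrite ltr_nat.
Qed.

Lemma lnn_ge0 x : (0 < x)%N -> 0 <= lnn x.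
Proof. by move=> hx; rewrite -lnn1; apply: lnn_le. Qed.

Lemma lnn2_gt0 : 0 < lnn 2.
Proof.
rewrite -lnn1; apply/RltP; apply: Rpower.ln_increasing; first exact: natr_gt0S.
by apply/RltP; rewrite ltr_nat.
Qed.

Lemma up_log_bound m : (0 < m)%N -> (up_log 2 m)%:R <= 1 + lnn m / lnn 2.
Proof.
move=> m0; have l2 := lnn2_gt0.
case: (leqP m 1) => hm.
  have -> : m = 1%N by lia.
  by rewrite up_log1 lnn1 mul0r addr0 ler01.
have hj := up_log_gtn (isT : (1 < 2)%N) hm.
have j0 : (0 < up_log 2 m)%N by rewrite up_log_gt0 hm.
have := lnn_le (expn_gt0 2 (up_log 2 m).-1) (ltnW hj).
rewrite lnn_exp // => h.
have -> : (up_log 2 m)%:R = ((up_log 2 m).-1)%:R + 1 :> Rdefinitions.R.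
  by rewrite -[in LHS](prednK j0) -natr1.
rewrite addrC lerD2l ler_pdivlMr //.
Qed.


Lemma lnn_div a b : (0 < a)%N -> (0 < b)%N -> Rpower.ln (a%:R / b%:R) = lnn a - lnn b.
Proof.
move=> ha hb.
have -> : a%:R / b%:R = Rdefinitions.Rmult a%:R (Rdefinitions.Rinv b%:R) by [].
rewrite Rpower.ln_mult; last 2 first.
- exact: natr_gt0S.
- by apply: Stdlib.Reals.RIneq.Rinv_0_lt_compat; exact: natr_gt0S.
rewrite Rpower.ln_Rinv; last exact: natr_gt0S.
by [].
Qed.

Lemma nhterm N a b : (0 < N)%N -> (0 < a)%N ->
  N%:R * hterm N a b = (b%:R * lnn a - Fx b) / lnn 2.
Proof.
move=> hN ha; have l2 := lnn2_gt0.
rewrite /hterm; case: eqP => [->|/eqP hb].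
  by rewrite /Fx mulr0 !mul0r subrr mul0r.
rewrite /log2 lnn_div ?lt0n // /Fx.
have hN' : N%:R != 0 :> Rdefinitions.R by rewrite pnatr_eq0 -lt0n.
have l2' : lnn 2 != 0 by rewrite gt_eqF.
change (Rpower.ln 2) with (lnn 2).
field.
  by rewrite hN' l2'.
by rewrite -lt0n.
Qed.

End Reals.

Section Main.
Variables sigma n k : nat.
Implicit Types (S : {fset (seq 'I_sigma)}) (u v : seq 'I_sigma).

Definition Wall : seq (seq (option 'I_sigma)) := [seq tval t | t : k.-tuple (option 'I_sigma)].
Definition Pairs := [seq (w, c) | w <- Wall, c <- enum 'I_sigma].
Definition Full : seq (seq 'I_sigma) := [seq tval t | t : k.-tuple 'I_sigma].
Definition FPairs := [seq (x, c) | x <- Full, c <- enum 'I_sigma].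
Definition Esh := flatten [seq strs sigma d | d <- iota 1 (minn k n.-1)].
Definition LL := up_log 2 n.

Definition block S w c := blk (Eseq sigma n) k S w c.
Definition fam S := [seq block S p.1 p.2 | p <- Pairs].
Definition params S := [seq (n_w k S p.1, n_wc k S p.1 p.2) | p <- Pairs].
Definition mask S := [seq (u \in S) | u <- Esh].
Definition nums S := flatten [seq bits LL (n_wc k S (map Some p.1) p.2) | p <- FPairs].
Definition idx S := bits (up_log 2 (size (Lst (params S)))) (index (fam S) (Lst (params S))).
Definition enc S := mask S ++ nums S ++ idx S.

Lemma mem_Wall w : (w \in Wall) = (size w == k).
Proof.
apply/idP/idP; first by case/mapP => t _ ->; rewrite size_tuple.
move=> h; apply/mapP; exists (Tuple h) => //; by rewrite mem_enum.
Qed.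

Lemma mem_Full x : (x \in Full) = (size x == k).
Proof.
apply/idP/idP; first by case/mapP => t _ ->; rewrite size_tuple.
move=> h; apply/mapP; exists (Tuple h) => //; by rewrite mem_enum.
Qed.

Lemma uniq_Wall : uniq Wall.
Proof. by rewrite map_inj_uniq ?enum_uniq //; exact: val_inj. Qed.

Lemma trie_in_E S : is_trie S -> nnodes S = n -> {subset S <= Eseq sigma n}.
Proof. by move=> hS hn u hu; apply: mem_E; rewrite -hn; exact: trie_depth. Qed.

Lemma nwE S w : n_w k S w = count (fun u => (u \in S) && (ctx k u == w)) S.
Proof. by rewrite /n_w (card_count _ (fset_uniq S)). Qed.

Lemma nwcE S w c : n_wc k S w c = count (fun u => (u \in S) && ((ctx k u == w) && (rcons u c \in S))) S.
Proof. by rewrite /n_wc (card_count _ (fset_uniq S)). Qed.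

Lemma size_block S w c : is_trie S -> nnodes S = n -> size (block S w c) = n_w k S w.
Proof.
move=> hS hn; rewrite /block /blk size_map size_filter /n_w.
by rewrite (card_count _ (uniq_E sigma n) (trie_in_E hS hn)).
Qed.

Lemma count_block S w c : is_trie S -> nnodes S = n -> count id (block S w c) = n_wc k S w c.
Proof.
move=> hS hn; rewrite /block /blk count_map count_filter /n_wc.
rewrite (card_count _ (uniq_E sigma n) (trie_in_E hS hn)).
by apply: eq_count => u /=; rewrite /out; case: (u \in S); case: (ctx k u == w); rewrite /= ?andbT ?andbF.
Qed.

Lemma fam_mem S : is_trie S -> nnodes S = n -> fam S \in Lst (params S).
Proof.
move=> hS hn; apply: (mem_Lst (f := fun p => block S p.1 p.2)
   (g := fun p => (n_w k S p.1, n_wc k S p.1 p.2))) => p _ /=.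
by apply: mem_bw; rewrite ?size_block ?count_block.
Qed.

Lemma nwc_lt S w c : is_trie S -> nnodes S = n -> n_wc k S w c < n.
Proof.
move=> hS hn; rewrite /n_wc -hn.
set A := [fset u in S | (ctx k u == w) && out S u c].
have inj : injective (fun u : seq 'I_sigma => rcons u c).
  by move=> x y /(congr1 (@parent sigma)); rewrite !parent_rcons.
have -> : #|` A| = #|` [fset rcons u c | u in A]| by rewrite (card_imfset _ _ inj).
rewrite [X in _ < X](cardfsD1 [::]) trie_nil // add1n ltnS.
apply: fsubset_leq_card; apply/fsubsetP => x /imfsetP [u /= + ->].
rewrite !inE /out => /andP [_ /andP [_ h]].
by rewrite h andbT; case: (u) => // a l; rewrite -cats1 -cat_cons.
Qed.


Lemma mask_eq S1 S2 : is_trie S1 -> is_trie S2 -> nnodes S1 = n -> nnodes S2 = n ->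
  mask S1 = mask S2 -> forall u, size u <= k -> (u \in S1) = (u \in S2).
Proof.
move=> t1 t2 n1 n2 hm u hu.
rewrite /nnodes in n1 n2.
case: (posnP (size u)) => [/size0nil ->|h0]; first by rewrite !trie_nil.
case: (leqP n (size u)) => hn.
  have a1 : u \notin S1 by apply/negP => /(trie_depth t1); rewrite n1; lia.
  have a2 : u \notin S2 by apply/negP => /(trie_depth t2); rewrite n2; lia.
  by rewrite (negbTE a1) (negbTE a2).
have uE : u \in Esh.
  apply/flattenP; exists (strs sigma (size u)); last exact: mem_strs.
  by apply: map_f; rewrite mem_iota; lia.
by move/eq_in_map: hm => /(_ u uE).
Qed.

Lemma flatten_inj (s t : seq (seq bool)) W : size s = size t ->
  all (fun x => size x == W) s -> all (fun x => size x == W) t ->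
  flatten s = flatten t -> s = t.
Proof.
elim: s t => [|a s IH] [|b t] //= [hs] /andP [/eqP ha hs'] /andP [/eqP hb ht'] /eqP.
rewrite eqseq_cat; last by rewrite ha hb.
by case/andP => /eqP -> /eqP /(IH _ hs hs' ht') ->.
Qed.

Lemma nums_eq S1 S2 : is_trie S1 -> is_trie S2 -> nnodes S1 = n -> nnodes S2 = n ->
  nums S1 = nums S2 -> forall x c, size x = k ->
  n_wc k S1 (map Some x) c = n_wc k S2 (map Some x) c.
Proof.
move=> t1 t2 n1 n2 hm x c hx.
have := flatten_inj _ _ _ hm; rewrite !size_map => /(_ LL erefl).
have al : forall S, all (fun y => size y == LL) [seq bits LL (n_wc k S (map Some p.1) p.2) | p <- FPairs].
  by move=> S; apply/allP => y /mapP [p _ ->]; rewrite size_bits.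
move=> /(_ (al _) (al _)) /eq_in_map /(_ (x, c)) /=.
have hin : (x, c) \in FPairs by apply: allpairs_f; rewrite ?mem_Full ?hx ?mem_enum.
move=> /(_ hin) /bits_inj; apply.
  apply: leq_trans (nwc_lt _ _ t1 n1) _; exact: up_logP.
apply: leq_trans (nwc_lt _ _ t2 n2) _; exact: up_logP.
Qed.

Lemma full_pmap (w : seq (option 'I_sigma)) : full w -> map Some (pmap id w) = w.
Proof. by elim: w => //= [[a|]] w IH //= /IH ->. Qed.

Lemma nonfull_eq S1 S2 : is_trie S1 -> is_trie S2 -> nnodes S1 = n -> nnodes S2 = n ->
  mask S1 = mask S2 -> forall w, ~~ full w ->
  [fset u in S1 | ctx k u == w] = [fset u in S2 | ctx k u == w] /\
  forall c, n_wc k S1 w c = n_wc k S2 w c.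
Proof.
move=> t1 t2 n1 n2 hm w hw.
have sm : forall u, ctx k u == w -> size u < k.
  by move=> u /eqP hu; move: hw; rewrite -hu ctx_full; lia.
split.
  apply/fsetP => u; rewrite !inE; case e: (ctx k u == w); rewrite ?andbF ?andbT //.
  by rewrite (mask_eq t1 t2 n1 n2 hm) // ltnW // sm.
move=> c; rewrite /n_wc; congr (#|` _|); apply/fsetP => u; rewrite !inE /out.
case e: (ctx k u == w); rewrite /= ?andbF ?andbT //.
have := sm _ e => hs.
rewrite (mask_eq t1 t2 n1 n2 hm) ?(ltnW hs) //.
by rewrite (mask_eq t1 t2 n1 n2 hm (u := rcons u c)) // size_rcons.
Qed.


Definition optl : seq (option 'I_sigma) := None :: map Some (enum 'I_sigma).

Lemma count_part (T : Type) (s : seq T) (P : pred T) (f : T -> option 'I_sigma) :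
  count P s = \sum_(o <- optl) count (fun x => P x && (f x == o)) s.
Proof.
elim: s => [|x s IH] /=; first by rewrite big1.
rewrite big_split /= -IH; congr (_ + _)%N.
case: (P x) => /=; last by rewrite big1.
rewrite -[RHS](@eq_bigr _ _ _ _ _ _ (fun o => if f x == o then 1 else 0)); last by move=> o _; case: (f x == o).
rewrite -big_mkcond sum1_count.
have -> : count (fun o => f x == o) optl = count_mem (f x) optl by apply: eq_count => o; rewrite eq_sym.
rewrite count_uniq_mem.
  by case: (f x) => [a|] //=; rewrite inE /= map_f // mem_enum.
rewrite /optl /= map_inj_uniq ?enum_uniq //; last by move=> ? ? [].
by rewrite andbT; apply/negP => /mapP [].
Qed.

Lemma nw_deriv S w0 a : 0 < k -> is_trie S ->
  n_w k S (rcons w0 (Some a)) = \sum_(o <- optl) n_wc k S (o :: w0) a.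
Proof.
move=> k0 hS.
pose A := [fset p in S | (rcons p a \in S) && (behead (ctx k p) == w0)].
have inj : injective (fun u : seq 'I_sigma => rcons u a).
  by move=> x y /(congr1 (@parent sigma)); rewrite !parent_rcons.
have E1 : [fset u in S | ctx k u == rcons w0 (Some a)] = [fset rcons p a | p in A].
  apply/fsetP => u.
  rewrite !inE; apply/andP/imfsetP.
    case/lastP: u => [|p a'] [hu].
      rewrite /ctx /= subn0 cats0 => /eqP /(congr1 (fun s => Some a \in s)).
      by rewrite mem_rcons inE eqxx mem_nseq andbF.
    rewrite (ctx_rcons _ _ k0) => /eqP /rcons_inj [h1 h2].
    case: h2 hu => -> hu; exists p => //=; rewrite /A !inE.
    have -> : p \in S by rewrite -(parent_rcons p a); exact: trie_parent.
    by rewrite hu -(ctx_behead _ k0) h1 eqxx.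
  case=> p /=; rewrite /A !inE => /andP [hp /andP [h1 /eqP h2]] ->.
  by rewrite h1 (ctx_rcons _ _ k0) (ctx_behead _ k0) h2.
have -> : n_w k S (rcons w0 (Some a)) = #|` A| by rewrite /n_w E1 (card_imfset _ _ inj).
rewrite /A (card_count _ (fset_uniq S)) //.
rewrite (count_part _ _ (fun p => head None (ctx k p))).
apply: eq_bigr => o _; rewrite nwcE; apply: eq_count => p.
have : size (ctx k p) > 0 by rewrite size_ctx.
case: (ctx k p) => [|o' w'] //= _.
rewrite eqseq_cons /out.
by case: (p \in S); case: (rcons p a \in S); case: (w' == w0); case: (o' == o).
Qed.


Lemma params_agree S1 S2 : is_trie S1 -> is_trie S2 -> nnodes S1 = n -> nnodes S2 = n ->
  mask S1 = mask S2 -> nums S1 = nums S2 ->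
  (forall w c, size w = k -> n_wc k S1 w c = n_wc k S2 w c) /\
  (forall w, size w = k -> n_w k S1 w = n_w k S2 w).
Proof.
move=> t1 t2 n1 n2 hm hn.
have hwc : forall w c, size w = k -> n_wc k S1 w c = n_wc k S2 w c.
  move=> w c hw; case hf: (full w).
    rewrite -(full_pmap hf); apply: (nums_eq t1 t2 n1 n2 hn).
    by rewrite -hw -{2}(full_pmap hf) size_map.
  by case: (nonfull_eq t1 t2 n1 n2 hm (negbT hf)) => _ ->.
split=> // w hw; case hf: (full w); last first.
  by case: (nonfull_eq t1 t2 n1 n2 hm (negbT hf)) => e _; rewrite /n_w e.
case: (posnP k) => k0.
  have e : forall S, is_trie S -> nnodes S = n -> n_w k S w = n.
    move=> S _ <-; rewrite /n_w /nnodes; congr (#|` _|); apply/fsetP => u.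
    rewrite !inE; case: (u \in S) => //=.
    by move: hw; rewrite k0 => /size0nil ->; rewrite ctx0.
  by rewrite !e.
case/lastP: w hw hf => [|w0 o] hw hf; first by move: hw => /= h; lia.
case: o hw hf => [a|] hw hf; last by move: hf; rewrite /full all_rcons.
rewrite !(nw_deriv _ _ k0) //; apply: eq_bigr => o _; apply: hwc.
by move: hw; rewrite size_rcons /=; lia.
Qed.

Lemma size_mask S : size (mask S) = size Esh.
Proof. by rewrite size_map. Qed.

Lemma size_nums S : size (nums S) = size FPairs * LL.
Proof.
rewrite /nums size_flatten /shape -map_comp.
rewrite (eq_map (g := fun _ => LL)); last by move=> p /=; rewrite size_bits.
by elim: FPairs => //= p s ->; rewrite mulSn.
Qed.

Lemma enc_inj S1 S2 : is_trie S1 -> is_trie S2 -> nnodes S1 = n -> nnodes S2 = n ->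
  enc S1 = enc S2 -> S1 = S2.
Proof.
move=> t1 t2 n1 n2 /eqP; rewrite /enc eqseq_cat ?size_mask // => /andP [/eqP hm].
rewrite eqseq_cat ?size_nums // => /andP [/eqP hn /eqP hi].
have [hwc hw] := params_agree t1 t2 n1 n2 hm hn.
have hp : params S1 = params S2.
  apply/eq_in_map => p /allpairsP [[w c] [hw' _ ->]] /=.
  move: hw'; rewrite mem_Wall => /eqP hsw.
  by rewrite hwc // hw.
have f1 := fam_mem t1 n1; have f2 := fam_mem t2 n2.
move: hi; rewrite /idx hp => /bits_inj.
have lt : forall S, fam S \in Lst (params S2) -> index (fam S) (Lst (params S2)) < 2 ^ up_log 2 (size (Lst (params S2))).
  move=> S hS; apply: leq_trans (up_logP _ _); last by [].
  by rewrite index_mem.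
rewrite hp in f1.
move=> /(_ (lt _ f1) (lt _ f2)) hidx.
have hf : fam S1 = fam S2.
  by rewrite -(nth_index [::] f1) -(nth_index [::] f2) hidx.
apply: (recon (E := Eseq sigma n) (k := k)) => //.
- exact: sorted_E.
- exact: trie_in_E.
- exact: trie_in_E.
move=> w c.
case: (eqVneq (size w) k) => hsw.
  move/eq_in_map: hf => /(_ (w, c)); apply.
  by apply: allpairs_f; rewrite ?mem_Wall ?hsw ?mem_enum.
rewrite /blk.
have nil : forall S, [seq u <- Eseq sigma n | (u \in S) && (ctx k u == w)] = [::].
  move=> S; apply/eqP; rewrite -size_eq0 size_filter -leqn0 leqNgt -has_count; apply/hasPn => u _.
  by apply/negP => /andP [_ /eqP e]; move: hsw; rewrite -e size_ctx eqxx.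
by rewrite !nil.
Qed.


Local Open Scope ring_scope.

Lemma mem_contexts S w : (w \in contexts k S) = has (fun u => ctx k u == w) S.
Proof.
rewrite /contexts mem_undup; apply/mapP/hasP => [[u hu ->]|[u hu /eqP <-]].
  by exists u.
by exists u.
Qed.

Lemma nw_pos S w : w \in contexts k S -> (0 < n_w k S w)%N.
Proof.
rewrite mem_contexts nwE -has_count => /hasP [u hu e]; apply/hasP; exists u => //.
by rewrite hu.
Qed.

Lemma nw_zero S w : w \notin contexts k S -> n_w k S w = 0%N.
Proof.
rewrite mem_contexts nwE => /hasPn h; apply/eqP; rewrite -leqn0 leqNgt -has_count.
by apply/hasPn => u hu; rewrite (negbTE (h u hu)) andbF.
Qed.

Lemma nwc_le S w c : (n_wc k S w c <= n_w k S w)%N.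
Proof. by rewrite nwcE nwE; apply: sub_count => u /andP [-> /andP [-> _]]. Qed.

Definition Gt S (p : seq (option 'I_sigma) * 'I_sigma) : Rdefinitions.R :=
  Fx (n_w k S p.1) - Fx (n_wc k S p.1 p.2) - Fx (n_w k S p.1 - n_wc k S p.1 p.2).

Lemma lnm_bound S : is_trie S -> nnodes S = n ->
  lnn (size (Lst (params S))) <= \sum_(p <- Pairs) Gt S p.
Proof.
move=> hS hn.
have key : (size (Lst (params S)) * \prod_(p <- Pairs)
    (n_wc k S p.1 p.2 ^ n_wc k S p.1 p.2 *
     (n_w k S p.1 - n_wc k S p.1 p.2) ^ (n_w k S p.1 - n_wc k S p.1 p.2))
   <= \prod_(p <- Pairs) n_w k S p.1 ^ n_w k S p.1)%N.
  rewrite size_Lst big_map -big_split /=; apply: leq_prod => p _; exact: binom_bound.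
have m0 : (0 < size (Lst (params S)))%N.
  by case: (Lst (params S)) (fam_mem hS hn).
have xx : forall x, (0 < x ^ x)%N by case=> [|x] //; rewrite expn_gt0.
have D0 : forall p : seq (option 'I_sigma) * 'I_sigma, (0 < n_wc k S p.1 p.2 ^ n_wc k S p.1 p.2 *
     (n_w k S p.1 - n_wc k S p.1 p.2) ^ (n_w k S p.1 - n_wc k S p.1 p.2))%N.
  by move=> p; rewrite muln_gt0 !xx.
have P0 : (0 < \prod_(p <- Pairs) (n_wc k S p.1 p.2 ^ n_wc k S p.1 p.2 *
     (n_w k S p.1 - n_wc k S p.1 p.2) ^ (n_w k S p.1 - n_wc k S p.1 p.2)))%N.
  by elim: Pairs => [|q s IH]; rewrite ?big_nil ?big_cons // muln_gt0 D0 IH.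
have pos : (0 < size (Lst (params S)) * \prod_(p <- Pairs) (n_wc k S p.1 p.2 ^ n_wc k S p.1 p.2 *
     (n_w k S p.1 - n_wc k S p.1 p.2) ^ (n_w k S p.1 - n_wc k S p.1 p.2)))%N by rewrite muln_gt0 m0 P0.
have := lnn_le pos key.
rewrite lnn_mul // !lnn_prod //.
under eq_bigr do rewrite lnn_mul ?xx // !lnn_self.
under [X in _ <= X -> _]eq_bigr do rewrite lnn_self.
rewrite /Gt.
have -> : \sum_(p <- Pairs) (Fx (n_w k S p.1) - Fx (n_wc k S p.1 p.2) - Fx (n_w k S p.1 - n_wc k S p.1 p.2))
  = \sum_(p <- Pairs) Fx (n_w k S p.1) - \sum_(p <- Pairs) (Fx (n_wc k S p.1 p.2) + Fx (n_w k S p.1 - n_wc k S p.1 p.2)).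
  by rewrite -sumrB; apply: eq_bigr => p _; rewrite opprD addrA.
lra.
Qed.


Lemma nH_eq S : is_trie S -> nnodes S = n ->
  n%:R * Hk k S = \sum_(p <- Pairs) Gt S p / lnn 2.
Proof.
move=> hS hn.
have n0 : (0 < n)%N by rewrite -hn /nnodes; have := trie_depth hS (trie_nil hS); lia.
rewrite /Hk mulr_sumr /Pairs big_allpairs /=.
have H0 : forall w, w \notin contexts k S -> \sum_(c <- enum 'I_sigma) Gt S (w, c) / lnn 2 = 0.
  move=> w hw; apply: big1 => c _.
  have e1 := nw_zero hw; have := nwc_le S w c; rewrite e1 leqn0 => /eqP e2.
  by rewrite /Gt /= e1 e2 sub0n /Fx mulr0n !mul0r !subr0 mul0r.
rewrite [RHS](bigID (fun w => w \in contexts k S)) /= [X in _ = _ + X]big1 ?addr0; last first.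
  by move=> w /H0.
rewrite -[RHS]big_filter.
have pe : perm_eq (contexts k S) [seq w <- Wall | w \in contexts k S].
  apply: uniq_perm; first exact: undup_uniq.
    by rewrite filter_uniq // uniq_Wall.
  move=> w; rewrite mem_filter; case e: (w \in contexts k S) => //=.
  move: e; rewrite mem_contexts => /hasP [u _ /eqP <-].
  by rewrite mem_Wall size_ctx eqxx.
rewrite (perm_big _ pe) /=; apply: eq_big_seq => w; rewrite mem_filter => /andP [hw _].
rewrite mulr_sumr -big_enum /=; apply: eq_bigr => c _.
have Np := nw_pos hw; have le := nwc_le S w c.
rewrite hn mulrDr !nhterm // /Gt /=.
rewrite natrB //.
set N := n_w k S w; set M := n_wc k S w c.
rewrite /Fx natrB //.
field.
by rewrite gt_eqF // lnn2_gt0.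
Qed.


Lemma geo_bound (j : nat) : (1 < sigma)%N ->
  (\sum_(d <- iota 1 j) sigma ^ d + 2 <= 2 * sigma ^ j)%N.
Proof.
move=> s1; elim: j => [|j IH]; first by rewrite big_nil.
have -> : iota 1 j.+1 = iota 1 j ++ [:: j.+1] by rewrite -[RHS]/(iota 1 j ++ iota (1 + j) 1) -iotaD addn1.
rewrite big_cat big_seq1.
have : (2 * sigma ^ j <= sigma ^ j.+1)%N by rewrite expnS leq_mul2r s1 orbT.
move: IH; set a := (sigma ^ j)%N; set b := (sigma ^ j.+1)%N; set c := (\sum_(_ <- _) _)%N.
move=> h1 h2; change (c + b + 2 <= 2 * b)%N; lia.
Qed.

Lemma size_Esh : size Esh = (\sum_(d <- iota 1 (minn k n.-1)) sigma ^ d)%N.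
Proof.
rewrite /Esh size_flatten /shape -map_comp sumnE big_map.
by apply: eq_bigr => d _; rewrite /= size_strs.
Qed.

Lemma Esh_bound : (1 < sigma)%N -> (size Esh <= 1 + sigma ^ k * LL)%N.
Proof.
move=> s1; rewrite size_Esh.
set m := minn k n.-1.
have s0 : (0 < sigma)%N by lia.
case: (posnP m) => m0; first by rewrite m0 big_nil.
have hL := up_logP n (isT : (1 < 2)%N); rewrite -/LL in hL.
case: (leqP n 2) => hn.
  have e : m = 1%N by rewrite /m; lia.
  rewrite e /= big_cons big_nil addn0 expn1.
  have -> : LL = 1%N.
    rewrite /LL; have -> : n = 2%N by rewrite /m in m0; lia.
    by rewrite up_lognn.
  have : (sigma ^ 1 <= sigma ^ k)%N by apply: leq_pexp2l => //; rewrite /m in m0; lia.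
  rewrite expn1; lia.
have L2 : (2 <= LL)%N.
  case: LL hL => [|[|l]] //; rewrite ?expn0 ?expn1 => h; lia.
have := geo_bound m s1.
have : (sigma ^ m <= sigma ^ k)%N by apply: leq_pexp2l => //; rewrite /m; lia.
have : (sigma ^ k * 2 <= sigma ^ k * LL)%N by rewrite leq_mul2l L2 orbT.
lia.
Qed.

Lemma size_FPairs : size FPairs = (sigma ^ k * sigma)%N.
Proof. by rewrite size_allpairs size_map -cardE card_tuple card_ord size_enum_ord. Qed.

Lemma logm_bound S : is_trie S -> nnodes S = n ->
  lnn (size (Lst (params S))) / lnn 2 <= n%:R * Hk k S.
Proof.
move=> hS hn; rewrite nH_eq // -mulr_suml ler_pM2r ?invr_gt0 ?lnn2_gt0 //.
exact: lnm_bound.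
Qed.

Lemma nH_ge0 S : is_trie S -> nnodes S = n -> 0 <= n%:R * Hk k S.
Proof.
move=> hS hn; apply: le_trans (logm_bound hS hn).
apply: divr_ge0; last exact: ltW lnn2_gt0.
apply: lnn_ge0; by case: (Lst (params S)) (fam_mem hS hn).
Qed.

Lemma enc_size S : is_trie S -> nnodes S = n -> (1 < sigma)%N ->
  (size (enc S))%:R <= n%:R * Hk k S + 2 + ((sigma + 1) * sigma ^ k * up_log 2 n)%:R.
Proof.
move=> hS hn s1.
have m0 : (0 < size (Lst (params S)))%N by case: (Lst (params S)) (fam_mem hS hn).
have h1 := up_log_bound m0.
have h2 := logm_bound hS hn.
have h3 := Esh_bound s1.
rewrite /enc !size_cat size_mask size_nums size_FPairs /idx size_bits.
have h4 : (size Esh + sigma ^ k * sigma * LL + 1 <= 2 + (sigma + 1) * sigma ^ k * up_log 2 n)%N.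
  rewrite -/LL mulnDl mul1n [(sigma * _)%N]mulnC; lia.
move: h4; rewrite -(ler_nat Rdefinitions.R) !natrD => h4.
lra.
Qed.

End Main.

Section Small.
Variable sigma : nat.

Lemma small_strings (hs : (sigma <= 1)%N) (u v : seq 'I_sigma) : size u = size v -> u = v.
Proof.
elim: u v => [|a u IH] [|b v] //= [e]; congr (_ :: _); last exact: IH.
apply: ord_inj; have := ltn_ord a; have := ltn_ord b; lia.
Qed.

Lemma small_sub (hs : (sigma <= 1)%N) (S1 S2 : {fset (seq 'I_sigma)}) u1 :
  is_trie S1 -> is_trie S2 -> u1 \in S1 -> u1 \notin S2 -> (S2 `<=` S1)%fset.
Proof.
move=> t1 t2 h1 h2; apply/fsubsetP => v hv.
case: (leqP (size v) (size u1)) => h.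
  have -> : v = take (size v) u1 by apply: (small_strings hs); rewrite size_takel.
  exact: trie_take.
have e : u1 = take (size u1) v by apply: (small_strings hs); rewrite size_takel // ltnW.
by move: h2; rewrite e (trie_take _ t2 hv).
Qed.

Lemma small_eq (hs : (sigma <= 1)%N) (S1 S2 : {fset (seq 'I_sigma)}) :
  is_trie S1 -> is_trie S2 -> nnodes S1 = nnodes S2 -> S1 = S2.
Proof.
move=> t1 t2; rewrite /nnodes => e; apply/eqP; case: (boolP (S1 `<=` S2)%fset) => h.
  by rewrite eqEfcard h -e leqnn.
case/fsubsetPn: h => u h1 h2.
by rewrite eq_sym eqEfcard (small_sub hs t1 t2 h1 h2) e leqnn.
Qed.

End Small.

Close Scope fset_scope.

Theorem theorem2 (sigma n k : nat) :
  exists enc : {fset (seq 'I_sigma)} -> seq bool,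
    (forall S1 S2 : {fset (seq 'I_sigma)},
        is_trie S1 -> is_trie S2 -> nnodes S1 = n -> nnodes S2 = n ->
        enc S1 = enc S2 -> S1 = S2) /\
    (forall S : {fset (seq 'I_sigma)},
        is_trie S -> nnodes S = n ->
        ((size (enc S))%:R <=
           n%:R * Hk k S + 2 + ((sigma + 1) * sigma ^ k * up_log 2 n)%:R)%R).
Proof.
case: (leqP sigma 1) => hs.
  exists (fun _ => [::]); split.
    by move=> S1 S2 t1 t2 n1 n2 _; apply: small_eq => //; rewrite n1 n2.
  move=> S hS hn; have := nH_ge0 k hS hn.
  have : (0 <= ((sigma + 1) * sigma ^ k * up_log 2 n)%:R :> Rdefinitions.R)%R by rewrite ler0n.
  rewrite /= mulr0n; lra.
exists (@enc sigma n k); split.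
  by move=> S1 S2 t1 t2 n1 n2; apply: enc_inj.
by move=> S hS hn; apply: enc_size.
Qed.
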